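(* Let $B$ be a nonzero real vector space, $\lfloor\cdot,\cdot\rfloor$ a symmetric bilinear form on $B$, $q(b):=\tfrac12\lfloor b,b\rfloor$, and let $A$ be a maximally $q$--positive subset of $B$. Then $\Phi_A$ is a BC--function and ${\cal P}_q(\Phi_A^@)={\cal P}_q(\Phi_A)=A$.
   Context: A subset $A\subset B$ is $q$--positive if $A\ne\emptyset$ and $q(b-c)\ge 0$ for all $b,c\in A$; it is maximally $q$--positive if it is $q$--positive and not properly contained in another $q$--positive set. $\Phi_A(b):=\sup_{a\in A}\big[\lfloor a,b\rfloor-q(a)\big]$ for $b\in B$. For a proper convex $f\colon B\to\,]{-}\infty,\infty]$, $f^@(c):=\sup_{b\in B}[\lfloor b,c\rfloor-f(b)]$. A BC--function is a proper convex $f$ with $f^@(b)\ge f(b)\ge q(b)$ for all $b\in B$. For $h\ge q$, ${\cal P}_q(h):=\{b\colon h(b)=q(b)\}$. *)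

(* Defs.v *)
From HB Require Import structures.
From mathcomp Require Import all_boot all_order all_algebra.
From mathcomp Require Import all_classical all_reals ereal.
Set Implicit Arguments. Unset Strict Implicit. Unset Printing Implicit Defensive.
Import Order.TTheory GRing.Theory Num.Theory.
Local Open Scope classical_set_scope.
Local Open Scope ring_scope.

Section Defs.
Context {R : realType} {B : lmodType R}.

Definition sym_bilinear (bf : B -> B -> R) : Prop :=
  (forall a b, bf a b = bf b a) /\
  (forall a (r : R) (x y : B), bf a (r *: x + y) = r * bf a x + bf a y).

Definition qform (bf : B -> B -> R) (b : B) : R := (bf b b) / 2.

Definition q_positive (bf : B -> B -> R) (A : set B) : Prop :=
  A !=set0 /\ (forall b c, A b -> A c -> 0 <= qform bf (b - c)).

Definition max_q_positive (bf : B -> B -> R) (A : set B) : Prop :=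
  q_positive bf A /\
  (forall A' : set B, q_positive bf A' -> A `<=` A' -> A' = A).

Definition PhiA (bf : B -> B -> R) (A : set B) (b : B) : \bar R :=
  ereal_sup [set ((bf a b - qform bf a)%:E) | a in A].

Definition fenchel (bf : B -> B -> R) (f : B -> \bar R) (c : B) : \bar R :=
  ereal_sup [set ((bf b c)%:E - f b)%E | b in [set: B]].

Definition proper_fun (f : B -> \bar R) : Prop :=
  (forall b, f b != -oo%E) /\ (exists b, f b != +oo%E).

Definition convex_fun (f : B -> \bar R) : Prop :=
  forall (x y : B) (t : R), 0 < t -> t < 1 ->
    let z := t *: x + (1 - t) *: y in
    (f z <= t%:E * f x + (1 - t)%:E * f y)%E.

Definition BC_function (bf : B -> B -> R) (f : B -> \bar R) : Prop :=
  proper_fun f /\ convex_fun f /\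
  (forall b, (fenchel bf f b >= f b)%E /\ (f b >= (qform bf b)%:E)%E).

Definition Pq (bf : B -> B -> R) (h : B -> \bar R) : set B :=
  [set b | h b = (qform bf b)%:E].

End Defs.

(* Main.v *)
Require Import Defs.
From HB Require Import structures.
From mathcomp Require Import all_boot all_order all_algebra.
From mathcomp Require Import all_classical all_reals ereal.
From mathcomp Require Import lra.
Import Order.TTheory GRing.Theory Num.Theory.
Local Open Scope classical_set_scope.
Local Open Scope ring_scope.

Section S.
Variables (R : realType) (B : lmodType R) (bf : B -> B -> R) (A : set B).
Hypothesis sym : sym_bilinear bf.
Hypothesis mqp : max_q_positive bf A.

Let q := qform bf.
Let Phi := PhiA bf A.

Lemma bfC a b : bf a b = bf b a. Proof. by case: sym. Qed.
Lemma bfL a r x y : bf a (r *: x + y) = r * bf a x + bf a y. Proof. by case: sym. Qed.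
Lemma bf0 a : bf a 0 = 0.
Proof.
have := bfL a 1 0 0; rewrite scaler0 addr0 mul1r => h; lra.
Qed.
Lemma bfD a x y : bf a (x + y) = bf a x + bf a y.
Proof. by have := bfL a 1 x y; rewrite scale1r mul1r. Qed.
Lemma bfN a x : bf a (- x) = - bf a x.
Proof. by have := bfL a (-1) x 0; rewrite addr0 bf0 addr0 scaleN1r mulN1r. Qed.
Lemma bfZ a r x : bf a (r *: x) = r * bf a x.
Proof. by have := bfL a r x 0; rewrite addr0 bf0 addr0. Qed.

Lemma qsub b a : q (b - a) = q b - bf a b + q a.
Proof.
have e1 : bf (b - a) (b - a) = bf (b - a) b - bf (b - a) a by rewrite bfD bfN.
have e2 : bf (b - a) b = bf b b - bf a b by rewrite bfC bfD bfN bfC.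
have e3 : bf (b - a) a = bf b a - bf a a by rewrite bfC bfD bfN (bfC a b).
rewrite /q /qform e1 e2 e3 (bfC b a); lra.
Qed.

Lemma Phi_ge a b : A a -> ((bf a b - q a)%:E <= Phi b)%E.
Proof. by move=> Aa; apply: ereal_sup_ubound; exists a. Qed.

Lemma Phi_not_ninfty b : Phi b != -oo%E.
Proof.
case: mqp => -[[a Aa] _] _.
have := Phi_ge a b Aa; case: (Phi b) => //.
Qed.

Lemma Phi_A a : A a -> Phi a = (q a)%:E.
Proof.
move=> Aa; apply/eqP; rewrite eq_le; apply/andP; split.
  apply: ge_ereal_sup => _ [a' Aa' <-]; rewrite lee_fin.
  case: mqp => -[_ hp] _; have := hp a a' Aa Aa'; rewrite -/q qsub; lra.
have := Phi_ge a a Aa.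
suff -> : bf a a - q a = q a by [].
rewrite /q /qform; lra.
Qed.

Lemma qsubC x y : q (x - y) = q (y - x).
Proof. rewrite !qsub bfC; lra. Qed.

Lemma Phi_le_imp b : (Phi b <= (q b)%:E)%E -> A b.
Proof.
move=> hb; case: mqp => -[[a0 Aa0] hp] hmax.
have posb : forall a, A a -> 0 <= q (b - a).
  move=> a Aa; have := le_trans (Phi_ge a b Aa) hb; rewrite lee_fin qsub; lra.
have hq : q_positive bf (A `|` [set b]).
  split; first by exists a0; left.
  move=> x y [Ax|->] [Ay|->].
  - exact: hp.
  - by rewrite -/q qsubC; apply: posb.
  - exact: posb.
  - by rewrite -/q subrr /q /qform bf0 mul0r.
have e := hmax _ hq (fun z hz => or_introl hz).
by rewrite -e; right.
Qed.

Lemma Phi_ge_q b : ((q b)%:E <= Phi b)%E.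
Proof.
case: (leP (Phi b) (q b)%:E) => h; last exact: ltW.
by rewrite Phi_A //; apply: Phi_le_imp.
Qed.

Let F := fenchel bf Phi.

Lemma F_ge c : (Phi c <= F c)%E.
Proof.
apply: ge_ereal_sup => _ [a Aa <-].
have : ((bf a c)%:E - Phi a <= F c)%E by apply: ereal_sup_ubound; exists a.
by rewrite Phi_A // -EFinB.
Qed.

Lemma F_A a : A a -> (F a <= (q a)%:E)%E.
Proof.
move=> Aa; apply: ge_ereal_sup => _ [b _ <-].
have := Phi_ge a b Aa; case: (Phi b) => [r| |] //=.
  rewrite !lee_fin bfC; lra.
move=> _; exact: leNye.
Qed.

Lemma Phi_convex : convex_fun Phi.
Proof.
move=> x y t t0 t1 /=.
have t1' : 0 < 1 - t by lra.
have hx := Phi_not_ninfty x; have hy := Phi_not_ninfty y.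
case Ex: (Phi x) hx => [r| |] // _; case Ey: (Phi y) hy => [s| |] // _.
- apply: ge_ereal_sup => _ [a Aa <-].
  have hxa := Phi_ge a x Aa; rewrite Ex lee_fin in hxa.
  have hya := Phi_ge a y Aa; rewrite Ey lee_fin in hya.
  rewrite -!EFinM -EFinD lee_fin bfD !bfZ.
  have := ler_wpM2l (ltW t0) hxa; have := ler_wpM2l (ltW t1') hya.
  move=> h1 h2; rewrite -/q; nra.
- by rewrite (mulry (1 - t)) gtr0_sg // mul1e -EFinM addey // leey.
- by rewrite (mulry t) gtr0_sg // mul1e -EFinM addye // leey.
- by rewrite (mulry t) (mulry (1 - t)) !gtr0_sg // !mul1e addey // leey.
Qed.

End S.

Theorem theorem3p11 (R : realType) (B : lmodType R) (bf : B -> B -> R)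
  (A : set B) :
  (exists b : B, b != 0) ->
  sym_bilinear bf ->
  max_q_positive bf A ->
  BC_function bf (PhiA bf A) /\
  Pq bf (fenchel bf (PhiA bf A)) = A /\
  Pq bf (PhiA bf A) = A.
Proof.
move=> _ sym mqp.
have [a0 Aa0] : A !=set0 by case: mqp => -[].
split; [split; [split|split]|split].
- exact: Phi_not_ninfty.
- by exists a0; rewrite (@Phi_A _ _ _ _ sym mqp _ Aa0).
- exact: Phi_convex.
- by move=> b; split; [apply: F_ge | apply: Phi_ge_q].
- apply/seteqP; split => b /=.
    move=> hb; apply: (@Phi_le_imp _ _ _ _ sym mqp); rewrite -hb; exact: F_ge.
  move=> Ab; apply/eqP; rewrite eq_le F_A //=.
  exact: le_trans (@Phi_ge_q _ _ _ _ sym mqp b) (@F_ge _ _ _ _ sym mqp b).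
- apply/seteqP; split => b /=.
    by move=> hb; apply: (@Phi_le_imp _ _ _ _ sym mqp); rewrite hb.
  by move=> Ab; apply: Phi_A.
Qed.
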